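(* Let $G$ be a regular subsequential method of sequential convergence. If a subset $F$ of $\mathbb{R}$ is $G$-sequentially compact, then $F$ is Abel sequentially compact.
   Context: Let $s$ be the space of all real sequences. A method is a linear function $G$ defined on a linear subspace $c_G\subseteq s$ into $\mathbb{R}$; $\mathbf{p}$ is $G$-convergent to $\ell$ if $\mathbf{p}\in c_G$ and $G(\mathbf{p})=\ell$. $G$ is regular if every convergent sequence $\mathbf{p}$ is $G$-convergent with $G(\mathbf{p})=\lim\mathbf{p}$; $G$ is subsequential if whenever $G(\mathbf{p})=\ell$ there is a subsequence of $\mathbf{p}$ converging (in the ordinary sense) to $\ell$. $F$ is $G$-sequentially compact if every sequence of points of $F$ has a $G$-convergent subsequence $\mathbf{r}$ with $G(\mathbf{r})\in F$. A sequence $(p_n)_{n\ge0}$ is Abel convergent to $\ell$ if $\sum_{k=0}^{\infty}p_k x^k$ converges for every $0\le x<1$ and $\lim_{x\to 1^-}(1-x)\sum_{k=0}^{\infty}p_k x^k=\ell$. $F$ is Abel sequentially compact if every sequence of points of $F$ has a subsequence Abel convergent to a limit in $F$. *)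

(* Defs.v *)
From Stdlib Require Import Reals.
From Coquelicot Require Import Coquelicot.
Open Scope R_scope.

Definition rseq := nat -> R.

(* A method: a linear function G defined on a linear subspace cG of s. *)
Definition is_method (cG : rseq -> Prop) (G : rseq -> R) : Prop :=
  cG (fun _ => 0) /\
  (forall p q, cG p -> cG q -> cG (fun n => p n + q n)) /\
  (forall (a : R) p, cG p -> cG (fun n => a * p n)) /\
  (forall p q, cG p -> cG q -> G (fun n => p n + q n) = G p + G q) /\
  (forall (a : R) p, cG p -> G (fun n => a * p n) = a * G p).

Definition strict_incr (phi : nat -> nat) : Prop :=
  forall n, (phi n < phi (S n))%nat.

Definition regular_method (cG : rseq -> Prop) (G : rseq -> R) : Prop :=
  forall (p : rseq) (l : R), is_lim_seq p l -> cG p /\ G p = l.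

Definition subsequential_method (cG : rseq -> Prop) (G : rseq -> R) : Prop :=
  forall p : rseq, cG p ->
    exists phi : nat -> nat, strict_incr phi /\ is_lim_seq (fun n => p (phi n)) (G p).

Definition G_seq_compact (cG : rseq -> Prop) (G : rseq -> R) (F : R -> Prop) : Prop :=
  forall x : rseq, (forall n, F (x n)) ->
    exists phi : nat -> nat, strict_incr phi /\
      cG (fun n => x (phi n)) /\ F (G (fun n => x (phi n))).

Definition abel_convergent (p : rseq) (l : R) : Prop :=
  (forall x : R, 0 <= x < 1 -> ex_series (fun k => p k * x ^ k)) /\
  filterlim (fun x => (1 - x) * Series (fun k => p k * x ^ k)) (at_left 1) (locally l).

Definition abel_seq_compact (F : R -> Prop) : Prop :=
  forall x : rseq, (forall n, F (x n)) ->
    exists phi : nat -> nat, exists l : R, strict_incr phi /\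
      abel_convergent (fun n => x (phi n)) l /\ F l.

(* Main.v *)
Require Import Defs.
From Stdlib Require Import Reals.
From Coquelicot Require Import Coquelicot.
From Stdlib Require Import Lra Lia.
Open Scope R_scope.

Lemma pow_le1 x n : 0 <= x <= 1 -> x ^ n <= 1.
Proof.
  intros Hx. induction n; simpl. lra. assert (0 <= x ^ n) by (apply pow_le; lra). nra.
Qed.

Lemma strict_mono phi : strict_incr phi -> forall a b, (a < b)%nat -> (phi a < phi b)%nat.
Proof.
  intros H a b Hab. induction Hab. apply H. specialize (H m). lia.
Qed.

Lemma strict_comp phi psi : strict_incr phi -> strict_incr psi -> strict_incr (fun n => phi (psi n)).
Proof. intros H1 H2 n. apply strict_mono; auto. Qed.

Lemma geom_ex x : 0 <= x < 1 -> forall e, ex_series (fun k => e * x ^ k).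
Proof.
  intros Hx e. exists (e * / (1 - x)). apply (is_series_scal_l e (fun k => x ^ k)).
  apply is_series_geom. rewrite Rabs_pos_eq; lra.
Qed.

Lemma geom_ser x : 0 <= x < 1 -> forall e, Series (fun k => e * x ^ k) = e / (1 - x).
Proof.
  intros Hx e. apply is_series_unique. apply (is_series_scal_l e (fun k => x ^ k)).
  apply is_series_geom. rewrite Rabs_pos_eq; lra.
Qed.

Lemma term_bound (a : nat -> R) N M e x k : 0 <= x < 1 -> (N <= M)%nat ->
  (forall k, (N <= k)%nat -> Rabs (a k) <= e) ->
  Rabs (a (M + k)%nat) * x ^ (M + k) <= e * x ^ k.
Proof.
  intros Hx HM Ha. rewrite pow_add.
  assert (0 <= x ^ M) by (apply pow_le; lra). assert (0 <= x ^ k) by (apply pow_le; lra).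
  assert (x ^ M <= 1) by (apply pow_le1; lra).
  assert (Rabs (a (M + k)%nat) <= e) by (apply Ha; lia).
  pose proof (Rabs_pos (a (M + k)%nat)).
  assert (Rabs (a (M + k)%nat) * (x ^ M * x ^ k) <= e * (x ^ M * x ^ k)) by
    (apply Rmult_le_compat_r; nra).
  assert (e * (x ^ M * x ^ k) <= e * x ^ k) by (apply Rmult_le_compat_l; nra).
  lra.
Qed.

Lemma tail_ex (a : nat -> R) N e x : 0 <= x < 1 -> (forall k, (N <= k)%nat -> Rabs (a k) <= e) ->
  ex_series (fun k => a k * x ^ k).
Proof.
  intros Hx Ha. apply (ex_series_incr_n _ N).
  apply (@ex_series_le R_AbsRing R_CompleteNormedModule _ (fun k => e * x ^ k)); [|apply geom_ex; auto].
  intros k. change (norm (a (N + k)%nat * x ^ (N + k))) with (Rabs (a (N + k)%nat * x ^ (N + k))).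
  rewrite Rabs_mult, (Rabs_pos_eq (x ^ _)) by (apply pow_le; lra).
  apply (term_bound a N N); auto.
Qed.

Lemma sum_bound (a : nat -> R) x N : 0 <= x < 1 ->
  Rabs (sum_f_R0 (fun k => a k * x ^ k) N) <= sum_f_R0 (fun k => Rabs (a k)) N.
Proof.
  intros Hx. eapply Rle_trans. apply sum_f_R0_triangle. apply sum_Rle. intros k _.
  rewrite Rabs_mult, (Rabs_pos_eq (x ^ k)) by (apply pow_le; lra).
  rewrite <- (Rmult_1_r (Rabs (a k))) at 2. apply Rmult_le_compat_l. apply Rabs_pos.
  apply pow_le1; lra.
Qed.

Lemma tail_bound (a : nat -> R) N e x : 0 <= x < 1 -> (forall k, (N <= k)%nat -> Rabs (a k) <= e) ->
  Rabs (Series (fun k => a k * x ^ k)) <= sum_f_R0 (fun k => Rabs (a k)) N + e / (1 - x).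
Proof.
  intros Hx Ha.
  rewrite (Series_incr_n _ (S N)) by (lia || (eapply tail_ex; eauto)).
  simpl Init.Nat.pred. eapply Rle_trans. apply Rabs_triang.
  apply Rplus_le_compat. apply sum_bound; auto.
  assert (Hex : ex_series (fun k => Rabs (a (S N + k)%nat * x ^ (S N + k)))).
  { apply (@ex_series_le R_AbsRing R_CompleteNormedModule _ (fun k => e * x ^ k)); [|apply geom_ex; auto].
    intros k. change (norm (Rabs (a (S N + k)%nat * x ^ (S N + k)))) with
      (Rabs (Rabs (a (S N + k)%nat * x ^ (S N + k)))). rewrite Rabs_Rabsolu.
    rewrite Rabs_mult, (Rabs_pos_eq (x ^ _)) by (apply pow_le; lra).
    apply (term_bound a N (S N)); auto. }
  eapply Rle_trans. apply Series_Rabs. auto.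
  rewrite <- geom_ser by auto. apply Series_le; [|apply geom_ex; auto].
  intros k. split. apply Rabs_pos.
  rewrite Rabs_mult, (Rabs_pos_eq (x ^ _)) by (apply pow_le; lra).
  apply (term_bound a N (S N)); auto.
Qed.

Lemma conv_eventually (p : rseq) (l : R) (eps : posreal) : is_lim_seq p l ->
  exists N, forall k, (N <= k)%nat -> Rabs (p k - l) <= eps.
Proof.
  intros H. assert (H' : forall e : posreal, eventually (fun n => Rabs (p n - l) < e)) by (apply (is_lim_seq_spec p (Finite l)); exact H). destruct (H' eps) as [N HN].
  exists N. intros k Hk. left. apply HN. lia.
Qed.

Lemma abel_of_conv (p : rseq) (l : R) : is_lim_seq p l -> abel_convergent p l.
Proof.
  intros Hp.
  assert (Hex : forall x, 0 <= x < 1 -> ex_series (fun k => p k * x ^ k)).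
  { intros x Hx. destruct (conv_eventually p l (mkposreal 1 Rlt_0_1) Hp) as [N HN].
    apply (tail_ex _ N (Rabs l + 1)); auto. intros k Hk. specialize (HN k Hk). simpl in HN.
    replace (p k) with ((p k - l) + l) by ring. eapply Rle_trans. apply Rabs_triang. lra. }
  split; auto.
  assert (Hdec : forall x, 0 <= x < 1 ->
    (1 - x) * Series (fun k => p k * x ^ k) = (1 - x) * Series (fun k => (p k - l) * x ^ k) + l).
  { intros x Hx.
    assert (Hd : ex_series (fun k => (p k - l) * x ^ k)).
    { destruct (conv_eventually p l (mkposreal 1 Rlt_0_1) Hp) as [N HN].
      apply (tail_ex _ N 1); auto. }
    rewrite (Series_ext (fun k => p k * x ^ k) (fun k => (p k - l) * x ^ k + l * x ^ k))
      by (intros; ring).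
    rewrite Series_plus; auto; [|apply geom_ex; auto]. rewrite geom_ser by auto.
    field. lra. }
  apply filterlim_locally. intros eps.
  assert (He2 : 0 < eps / 2) by (destruct eps; simpl; lra).
  destruct (conv_eventually p l (mkposreal _ He2) Hp) as [N HN]. simpl in HN.
  set (C := sum_f_R0 (fun k => Rabs (p k - l)) N).
  assert (HC : 0 <= C).
  { unfold C. apply cond_pos_sum. intros; apply Rabs_pos. }
  assert (Hdel : 0 < Rmin 1 (eps / 2 / (C + 1))).
  { apply Rmin_pos. lra. apply Rdiv_lt_0_compat; lra. }
  exists (mkposreal _ Hdel). intros y Hy Hy1. simpl in Hy.
  unfold ball in Hy |- *; simpl in Hy |- *. unfold AbsRing_ball, abs, minus, plus, opp in Hy |- *.
  simpl in Hy |- *.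
  assert (Hb1 : Rabs (y - 1) < 1) by (eapply Rlt_le_trans; [apply Hy|apply Rmin_l]).
  assert (Hb2 : Rabs (y - 1) < eps / 2 / (C + 1)) by (eapply Rlt_le_trans; [apply Hy|apply Rmin_r]).
  rewrite Rabs_left in Hb1, Hb2 by lra.
  assert (Hx : 0 <= y < 1) by lra.
  change (Rabs ((1 - y) * Series (fun k => p k * y ^ k) + - l) < eps).
  rewrite Hdec by auto.
  replace ((1 - y) * Series (fun k => (p k - l) * y ^ k) + l + - l) with
    ((1 - y) * Series (fun k => (p k - l) * y ^ k)) by ring.
  rewrite Rabs_mult, Rabs_pos_eq by lra.
  pose proof (tail_bound (fun k => p k - l) N (eps / 2) y Hx HN) as TB. fold C in TB.
  eapply Rle_lt_trans. apply Rmult_le_compat_l. lra. apply TB.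
  rewrite Rmult_plus_distr_l.
  replace ((1 - y) * (eps / 2 / (1 - y))) with (eps / 2) by (field; lra).
  assert ((1 - y) * C < eps / 2).
  { assert ((1 - y) * (C + 1) < eps / 2).
    { apply (Rmult_lt_compat_r (C + 1)) in Hb2; [|lra].
      replace (eps / 2 / (C + 1) * (C + 1)) with (eps / 2) in Hb2 by (field; lra).
      replace ((1 - y) * (C + 1)) with (- (y - 1) * (C + 1)) by ring. exact Hb2. }
    assert (0 <= 1 - y) by lra.
    assert ((1 - y) * (C + 1) = (1 - y) * C + (1 - y)) by ring. lra. }
  unfold C in *. destruct eps; simpl in *; lra.
Qed.

Theorem theorem13 (cG : rseq -> Prop) (G : rseq -> R) (F : R -> Prop) :
  is_method cG G ->
  regular_method cG G ->
  subsequential_method cG G ->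
  G_seq_compact cG G F ->
  abel_seq_compact F.
Proof.
  intros _ _ Hsub Hcomp x Hx.
  destruct (Hcomp x Hx) as [phi [Hphi [HcG HF]]].
  destruct (Hsub _ HcG) as [psi [Hpsi Hlim]].
  exists (fun n => phi (psi n)), (G (fun n => x (phi n))).
  split; [apply strict_comp; auto|]. split; auto.
  apply abel_of_conv. exact Hlim.
Qed.
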